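(* Let $\omega_N$ be the vorticity of the SV approximation, with arbitrary parameters $\epsilon_N,m_N,a_N>0$. Let $C>0$ be a constant such that $\sum_{0<|k|\le N}|k|^{-2}\le C\log(N)$ for all $N\ge2$ (sum over $k\in\mathbb{Z}^2$). For $\alpha>0$ put \[ \beta_N=\alpha^2+8\epsilon_N^2m_N^2,\qquad \gamma_N=C\log(N). \] Then \[ \|e^{\alpha t|\nabla|}\omega_N(\cdot,t)\|_{L^2}^2\le\frac{\|\omega_N(\cdot,0)\|_{L^2}^2\,e^{\beta_Nt/\epsilon_N}}{1-\frac{\gamma_N\|\omega_N(\cdot,0)\|_{L^2}^2}{\beta_N}\big[e^{\beta_Nt/\epsilon_N}-1\big]} \] for all $0\le t<t^*$, where $t^*=\frac{\epsilon_N}{\beta_N}\log\Big(1+\frac{\beta_N}{\gamma_N\|\omega_N(\cdot,0)\|_{L^2}^2}\Big)$.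
   Context: Let $\mathbb{T}^2=\mathbb{R}^2/(2\pi\mathbb{Z})^2$. For $k=(k_1,k_2)\in\mathbb{Z}^2$ let $|k|$ denote the Euclidean norm and $|k|_\infty=\max(|k_1|,|k_2|)$. Fourier coefficients are $\hat f_k=(2\pi)^{-2}\int_{\mathbb{T}^2}f(x)e^{-ik\cdot x}\,dx$. $P_Nf:=\sum_{|k|_\infty\le N}\hat f_k e^{ik\cdot x}$. Convolution is $(K*f)(x)=\int_{\mathbb{T}^2}K(x-y)f(y)\,dy$, so $\widehat{(K*f)}_k=\widetilde K_k\hat f_k$ with $\widetilde K_k:=\int_{\mathbb{T}^2}K(x)e^{-ik\cdot x}dx$. $|\nabla|$ and $e^{\alpha|\nabla|}$ ($\alpha\in\mathbb{R}$) are the Fourier multipliers with symbols $|k|$ and $e^{\alpha|k|}$. For $v=(v^1,v^2)$, $\mathrm{curl}\,v=\partial_1v^2-\partial_2v^1$. Initial data: $u_0\in L^2(\mathbb{T}^2;\mathbb{R}^2)$ with $\operatorname{div}u_0=0$ in distributions and $\int u_0\,dx=0$; $\omega_0:=\mathrm{curl}\,u_0\in H^{-1}(\mathbb{T}^2)$. SV scheme: for integers $N\ge2$ fix parameters $\epsilon_N>0$, $m_N\ge0$, $1\le a_N\le N$, and: numbers $\hat R_k\in[0,1]$ with $\hat R_k=1$ for $|k|\le m_N$, $\hat R_k=0$ for $|k|>2m_N$; $R_{m_N}$ is the trigonometric polynomial with $\widetilde{(R_{m_N})}_k=\hat R_k$, and $Q_N$ is the Fourier multiplier with symbol $\hat Q_k:=1-\hat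 R_k$; $K_{a_N}$ is a trigonometric polynomial with $\widetilde{(K_{a_N})}_k=0$ unless $|k|_\infty\le a_N$ and $|\widetilde{(K_{a_N})}_k|\le1$. The SV approximation is the trigonometric polynomial field $u_N(x,t)=\sum_{0<|k|_\infty\le N}\hat u_k(t)e^{ik\cdot x}$, $k\cdot\hat u_k=0$, solving $\partial_tu_N+P_N(u_N\cdot\nabla u_N)+\nabla p_N=\epsilon_N\Delta(Q_Nu_N)$, $\operatorname{div}u_N=0$, $u_N(\cdot,0)=K_{a_N}*u_0$. Its vorticity $\omega_N:=\mathrm{curl}\,u_N$ solves $\partial_t\omega_N+P_N(u_N\cdot\nabla\omega_N)=\epsilon_N\Delta(Q_N\omega_N)$, $\omega_N(\cdot,0)=K_{a_N}*\omega_0$. *)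

(* Defs.v *)
From Stdlib Require Import Reals ZArith Lra Bool.
Open Scope R_scope.

Definition cpx := (R * R)%type.
Definition C0 : cpx := (0, 0).
Definition Ci : cpx := (0, 1).
Definition RtoC (r : R) : cpx := (r, 0).
Definition Cadd (z w : cpx) : cpx := (fst z + fst w, snd z + snd w).
Definition Copp (z : cpx) : cpx := (- fst z, - snd z).
Definition Cmul (z w : cpx) : cpx :=
  (fst z * fst w - snd z * snd w, fst z * snd w + snd z * fst w).
Definition Cscal (r : R) (z : cpx) : cpx := (r * fst z, r * snd z).
Definition Cconj (z : cpx) : cpx := (fst z, - snd z).
Definition Cnorm2 (z : cpx) : R := fst z ^ 2 + snd z ^ 2.

Definition mode := (Z * Z)%type.
Definition kneg (k : mode) : mode := (- fst k, - snd k)%Z.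
Definition ksub (k p : mode) : mode := (fst k - fst p, snd k - snd p)%Z.
Definition knorm2 (k : mode) : R := IZR (fst k * fst k + snd k * snd k).
Definition knorm (k : mode) : R := sqrt (knorm2 k).
Definition in_boxb (n : Z) (k : mode) : bool :=
  andb (Z.abs (fst k) <=? n)%Z (Z.abs (snd k) <=? n)%Z.

(** sum_{j=-n}^{n} f j *)
Definition sumZ (n : nat) (f : Z -> R) : R :=
  sum_f_R0 (fun i => f (Z.of_nat i - Z.of_nat n)%Z) (2 * n).
Definition box_sum (n : nat) (f : mode -> R) : R :=
  sumZ n (fun a => sumZ n (fun b => f (a, b))).
Definition Cbox_sum (n : nat) (f : mode -> cpx) : cpx :=
  (box_sum n (fun k => fst (f k)), box_sum n (fun k => snd (f k))).

(** sum_{k in Z^2, 0 < |k| <= n} |k|^{-2}  (|k| <= n implies |k|_oo <= n) *)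
Definition sum_inv_sq (n : nat) : R :=
  box_sum n (fun k =>
    if andb (0 <? fst k * fst k + snd k * snd k)%Z
            (fst k * fst k + snd k * snd k <=? Z.of_nat n * Z.of_nat n)%Z
    then / knorm2 k else 0).

(** * Vector fields given by Fourier coefficients: v k = (v^1_k, v^2_k) *)
Definition vfield := (mode -> cpx * cpx)%type.

(** Fourier coefficients of curl v = d1 v^2 - d2 v^1 :
    (curl v)^_k = i (k1 v^2_k - k2 v^1_k) *)
Definition curl_hat (v : vfield) (k : mode) : cpx :=
  Cmul Ci (Cadd (Cscal (IZR (fst k)) (snd (v k)))
                (Cscal (- IZR (snd k)) (fst (v k)))).

(** Fourier coefficient of component [comp] of (v . grad) v at mode k, for
    v supported in the box |k|_oo <= n:
    sum_{p+q=k} (sum_l v^l_p (i q_l)) v^comp_q . *)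
Definition adv_hat (n : nat) (v : vfield) (comp : cpx * cpx -> cpx)
  (k : mode) : cpx :=
  Cbox_sum n (fun p =>
    let q := ksub k p in
    Cmul (Cadd (Cmul (fst (v p)) (Cmul Ci (RtoC (IZR (fst q)))))
               (Cmul (snd (v p)) (Cmul Ci (RtoC (IZR (snd q))))))
         (comp (v q))).

(** ||f||_{L^2}^2 = int_{T^2} |f|^2 = (2 pi)^2 sum_k |f^_k|^2, for f supported
    in the box |k|_oo <= n *)
Definition L2sq (n : nat) (w : mode -> cpx) : R :=
  (2 * PI) ^ 2 * box_sum n (fun k => Cnorm2 (w k)).

(** ||e^{s |grad|} f||_{L^2}^2, for f supported in the box |k|_oo <= n *)
Definition expL2sq (n : nat) (s : R) (w : mode -> cpx) : R :=
  (2 * PI) ^ 2 * box_sum n (fun k => Cnorm2 (Cscal (exp (s * knorm k)) (w k))).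

(** u0 in L^2(T^2;R^2), div u0 = 0, mean zero, via its Fourier coefficients *)
Definition u0_admissible (u0h : vfield) : Prop :=
  (forall k, u0h (kneg k) = (Cconj (fst (u0h k)), Cconj (snd (u0h k)))) /\
  (forall k, Cadd (Cscal (IZR (fst k)) (fst (u0h k)))
                  (Cscal (IZR (snd k)) (snd (u0h k))) = C0) /\
  u0h (0%Z, 0%Z) = (C0, C0) /\
  (exists M, forall n, box_sum n (fun k => Cnorm2 (fst (u0h k)) + Cnorm2 (snd (u0h k))) <= M).

Definition R_admissible (m : R) (Rhat : mode -> R) : Prop :=
  (forall k, 0 <= Rhat k <= 1) /\
  (forall k, knorm k <= m -> Rhat k = 1) /\
  (forall k, 2 * m < knorm k -> Rhat k = 0).

Definition K_admissible (a : nat) (Kt : mode -> cpx) : Prop :=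
  (forall k, in_boxb (Z.of_nat a) k = false -> Kt k = C0) /\
  (forall k, Cnorm2 (Kt k) <= 1).

Definition has_deriv_C (f : R -> cpx) (t : R) (d : cpx) : Prop :=
  derivable_pt_lim (fun s => fst (f s)) t (fst d) /\
  derivable_pt_lim (fun s => snd (f s)) t (snd d).

(** u (t) = Fourier coefficients of u_N(.,t), p (t) those of p_N(.,t).
    Equation, coefficientwise for every k in Z^2 and every t >= 0:
    d/dt u_k = 1_{|k|_oo<=N} (-(u.grad u)^_k) - i k p_k - eps |k|^2 Q_k u_k,
    with Q_k = 1 - Rhat_k. *)
Definition SV_solution (N : nat) (eps : R) (Rhat : mode -> R) (Kt : mode -> cpx)
  (u0h : vfield) (u : R -> vfield) (p : R -> mode -> cpx) : Prop :=
  (forall t k, 0 <= t ->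
     (k = (0%Z, 0%Z) \/ in_boxb (Z.of_nat N) k = false) -> u t k = (C0, C0)) /\
  (forall t k, 0 <= t ->
     Cadd (Cscal (IZR (fst k)) (fst (u t k))) (Cscal (IZR (snd k)) (snd (u t k))) = C0) /\
  (* initial datum u_N(.,0) = K_{a_N} * u0 *)
  (forall k, u 0 k = (Cmul (Kt k) (fst (u0h k)), Cmul (Kt k) (snd (u0h k)))) /\
  (forall t k, 0 <= t ->
     has_deriv_C (fun s => fst (u s k)) t
       (Cadd (if in_boxb (Z.of_nat N) k then Copp (adv_hat N (u t) fst k) else C0)
         (Cadd (Copp (Cmul Ci (Cscal (IZR (fst k)) (p t k))))
               (Copp (Cscal (eps * knorm2 k * (1 - Rhat k)) (fst (u t k)))))) /\
     has_deriv_C (fun s => snd (u s k)) t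
       (Cadd (if in_boxb (Z.of_nat N) k then Copp (adv_hat N (u t) snd k) else C0)
         (Cadd (Copp (Cmul Ci (Cscal (IZR (snd k)) (p t k))))
               (Copp (Cscal (eps * knorm2 k * (1 - Rhat k)) (snd (u t k))))))).

(* Main.v *)
Require Import Defs.
From Stdlib Require Import Reals ZArith.
From Stdlib Require Import Lra List Lia.
From Coquelicot Require Complex.
Open Scope R_scope.


Definition lsum {A : Type} (l : list A) (f : A -> R) : R :=
  fold_right (fun x acc => f x + acc) 0 l.

Lemma lsum_nil {A} (f : A -> R) : lsum nil f = 0.
Proof. reflexivity. Qed.
Lemma lsum_cons {A} x (l : list A) f : lsum (x :: l) f = f x + lsum l f.
Proof. reflexivity. Qed.
Lemma lsum_app {A} (l1 l2 : list A) f : lsum (l1 ++ l2) f = lsum l1 f + lsum l2 f.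
Proof. induction l1; simpl; [lra|]. unfold lsum in *; simpl. rewrite IHl1; lra. Qed.
Lemma lsum_map {A B} (g : A -> B) l f : lsum (map g l) f = lsum l (fun x => f (g x)).
Proof. induction l; simpl; auto. unfold lsum in *; simpl; now rewrite IHl. Qed.
Lemma lsum_ext {A} (l : list A) f g : (forall x, In x l -> f x = g x) -> lsum l f = lsum l g.
Proof. induction l; intros H; simpl; auto. unfold lsum in *; simpl.
  rewrite H by (left; auto). rewrite IHl; auto. intros; apply H; right; auto. Qed.
Lemma lsum_le {A} (l : list A) f g : (forall x, In x l -> f x <= g x) -> lsum l f <= lsum l g.
Proof. induction l; intros H; simpl; [lra|]. unfold lsum in *; simpl.
  assert (f a <= g a) by (apply H; left; auto).
  assert (fold_right (fun x acc => f x + acc) 0 l <= fold_right (fun x acc => g x + acc) 0 l)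
   by (apply IHl; intros; apply H; right; auto). lra. Qed.
Lemma lsum_nonneg {A} (l : list A) f : (forall x, In x l -> 0 <= f x) -> 0 <= lsum l f.
Proof. intros H. replace 0 with (lsum l (fun _ => 0)).
  apply lsum_le; auto. induction l; simpl; auto. unfold lsum in *; simpl; rewrite IHl; try lra.
  intros; apply H; right; auto. Qed.
Lemma lsum_plus {A} (l : list A) f g : lsum l (fun x => f x + g x) = lsum l f + lsum l g.
Proof. induction l; simpl; [lra|]. unfold lsum in *; simpl. rewrite IHl; lra. Qed.
Lemma lsum_scal {A} (l : list A) c f : lsum l (fun x => c * f x) = c * lsum l f.
Proof. induction l; simpl; [lra|]. unfold lsum in *; simpl. rewrite IHl; lra. Qed.
Lemma lsum_zero {A} (l : list A) : lsum l (fun _ => 0) = 0.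
Proof. induction l; simpl; auto. unfold lsum in *; simpl. rewrite IHl; lra. Qed.
Lemma lsum_swap {A B} (l1 : list A) (l2 : list B) f :
  lsum l1 (fun x => lsum l2 (fun y => f x y)) = lsum l2 (fun y => lsum l1 (fun x => f x y)).
Proof. induction l1.
  - simpl. symmetry; apply lsum_zero.
  - rewrite lsum_cons, IHl1, <- lsum_plus. reflexivity. Qed.
Lemma lsum_prod {A B} (l1 : list A) (l2 : list B) f :
  lsum (list_prod l1 l2) f = lsum l1 (fun a => lsum l2 (fun b => f (a, b))).
Proof. induction l1; simpl; auto. rewrite lsum_app, lsum_map, IHl1. reflexivity. Qed.

Lemma sum_f_R0_lsum h m : sum_f_R0 h m = lsum (seq 0 (S m)) h.
Proof. induction m. simpl. unfold lsum; simpl; lra.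
  change (sum_f_R0 h (S m)) with (sum_f_R0 h m + h (S m)).
  rewrite IHm. rewrite (seq_S (S m) 0). rewrite lsum_app. rewrite lsum_cons, lsum_nil. simpl. lra. Qed.

Lemma lsum_CS {A} (l : list A) x y :
  (lsum l (fun i => x i * y i))^2 <= lsum l (fun i => x i ^ 2) * lsum l (fun i => y i ^ 2).
Proof. induction l. rewrite !lsum_nil; lra.
  rewrite !lsum_cons.
  set (S := lsum l (fun i => x i * y i)) in *.
  set (P := lsum l (fun i => x i ^ 2)) in *.
  set (Q := lsum l (fun i => y i ^ 2)) in *.
  assert (HP: 0 <= P). { subst P. apply lsum_nonneg; intros; nra. }
  assert (HQ: 0 <= Q). { subst Q. apply lsum_nonneg; intros; nra. }
  assert (2 * S * (x a * y a) <= P * y a ^ 2 + Q * x a ^ 2).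
  { destruct (Rle_dec (2 * S * (x a * y a)) 0). nra.
    apply Rsqr_incr_0_var. unfold Rsqr.
    assert ((P * y a ^ 2 - Q * x a ^ 2)^2 >= 0) by (apply Rle_ge, pow2_ge_0).
    assert (S^2 * (x a^2*y a^2) <= P*Q*(x a^2 * y a^2)) by (apply Rmult_le_compat_r; nra). nra. nra. }
  nra. Qed.

Lemma lsum_wCS {A} (l : list A) b c : (forall i, In i l -> 0 <= b i) ->
  (lsum l (fun i => b i * c i))^2 <= lsum l b * lsum l (fun i => b i * c i ^ 2).
Proof. induction l; intros Hb. rewrite !lsum_nil; lra.
  rewrite !lsum_cons.
  set (S := lsum l (fun i => b i * c i)) in *.
  set (P := lsum l b) in *.
  set (Q := lsum l (fun i => b i * c i ^ 2)) in *.
  assert (Hl: forall i, In i l -> 0 <= b i) by (intros; apply Hb; right; auto).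
  specialize (IHl Hl).
  assert (Hba: 0 <= b a) by (apply Hb; left; auto).
  assert (HP: 0 <= P). { subst P. apply lsum_nonneg; auto. }
  assert (HQ: 0 <= Q). { subst Q. apply lsum_nonneg; intros; specialize (Hl x H); nra. }
  assert (2 * S * c a <= P * c a ^ 2 + Q).
  { destruct (Rle_dec (2 * S * c a) 0). nra.
    apply Rsqr_incr_0_var. unfold Rsqr.
    assert ((P * c a ^ 2 - Q)^2 >= 0) by (apply Rle_ge, pow2_ge_0).
    assert (S^2 * (c a^2) <= P*Q*(c a^2)) by (apply Rmult_le_compat_r; nra). nra. nra. }
  assert (b a * (2 * S * c a) <= b a * (P * c a ^ 2 + Q)) by (apply Rmult_le_compat_l; auto).
  nra. Qed.


Definition zl (n : nat) : list Z := map (fun i => (Z.of_nat i - Z.of_nat n)%Z) (seq 0 (S (2*n))).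
Definition BL (n : nat) : list mode := list_prod (zl n) (zl n).

Lemma sumZ_lsum n g : sumZ n g = lsum (zl n) g.
Proof. unfold sumZ, zl. rewrite sum_f_R0_lsum, lsum_map. reflexivity. Qed.
Lemma box_sum_lsum n f : box_sum n f = lsum (BL n) f.
Proof. unfold box_sum, BL. etransitivity; [|symmetry; apply lsum_prod].
  rewrite sumZ_lsum. apply lsum_ext; intros. rewrite sumZ_lsum; auto. Qed.

Lemma In_zl n a : In a (zl n) <-> (- Z.of_nat n <= a <= Z.of_nat n)%Z.
Proof. unfold zl. rewrite in_map_iff. split.
  - intros [i [Hi Hin]]. apply in_seq in Hin. lia.
  - intros H. exists (Z.to_nat (a + Z.of_nat n)). split. lia. apply in_seq. lia. Qed.

Lemma In_BL n k : In k (BL n) <-> in_boxb (Z.of_nat n) k = true.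
Proof. destruct k as [a b]. unfold BL. change (In (a, b) (@list_prod Z Z (zl n) (zl n)) <-> in_boxb (Z.of_nat n) (a, b) = true). rewrite in_prod_iff, !In_zl. unfold in_boxb; simpl.
  rewrite Bool.andb_true_iff, !Z.leb_le. lia. Qed.

Lemma NoDup_zl n : NoDup (zl n).
Proof. unfold zl. apply NoDup_map_NoDup_ForallPairs. intros x y _ _ H; lia. apply seq_NoDup. Qed.

Lemma NoDup_prod {A B} (l1 : list A) (l2 : list B) : NoDup l1 -> NoDup l2 -> NoDup (list_prod l1 l2).
Proof. induction 1; intros H2; simpl. constructor.
  apply NoDup_app; auto.
  - apply NoDup_map_NoDup_ForallPairs; auto. intros a b _ _ E; now inversion E.
  - intros [a b] Hm Hm2. apply in_map_iff in Hm. destruct Hm as [y [E _]]. inversion E; subst.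
    apply in_prod_iff in Hm2. tauto. Qed.

Lemma NoDup_BL n : NoDup (BL n).
Proof. apply NoDup_prod; apply NoDup_zl. Qed.

Section Reindex.
Context {A : Type} (eqd : forall a b : A, {a = b} + {a <> b}).

Lemma lsum_delta_in (L : list A) g x : NoDup L -> In x L ->
  lsum L (fun j => if eqd j x then g j else 0) = g x.
Proof. induction 1; intros Hin. destruct Hin.
  rewrite lsum_cons. destruct Hin as [<-|Hin].
  - destruct (eqd x0 x0) as [_|]; [|congruence].
    rewrite (lsum_ext _ _ (fun _ => 0)). rewrite lsum_zero; lra.
    intros y Hy. destruct (eqd y x0); subst; tauto.
  - rewrite IHNoDup by auto. destruct (eqd x0 x); subst; [tauto|lra]. Qed.

Lemma lsum_delta_notin (L : list A) g x : ~ In x L ->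
  lsum L (fun j => if eqd j x then g j else 0) = 0.
Proof. intros H. rewrite (lsum_ext _ _ (fun _ => 0)). apply lsum_zero.
  intros y Hy. destruct (eqd y x); subst; tauto. Qed.

Lemma count_le1 (l : list A) (s : A -> A) j : NoDup l -> (forall x y, s x = s y -> x = y) ->
  lsum l (fun k => if eqd j (s k) then 1 else 0) <= 1.
Proof. intros Hn Hs. induction Hn. rewrite lsum_nil; lra.
  rewrite lsum_cons. destruct (eqd j (s x)).
  - rewrite (lsum_ext _ _ (fun _ => 0)). rewrite lsum_zero; lra.
    intros y Hy. destruct (eqd j (s y)); auto. subst. apply Hs in e0. subst; tauto.
  - lra. Qed.

Lemma reindex_le (l1 l2 : list A) (s : A -> A) (f : A -> R) :
  NoDup l1 -> NoDup l2 -> (forall j, 0 <= f j) ->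
  (forall k, In k l1 -> f (s k) = 0 \/ In (s k) l2) ->
  (forall x y, s x = s y -> x = y) ->
  lsum l1 (fun k => f (s k)) <= lsum l2 f.
Proof. intros N1 N2 Hf Hsup Hs.
  rewrite (lsum_ext l1 _ (fun k => lsum l2 (fun j => if eqd j (s k) then f j else 0))).
  2:{ intros k Hk. destruct (Hsup k Hk) as [H0|H0].
      destruct (in_dec eqd (s k) l2). rewrite lsum_delta_in; auto.
      rewrite lsum_delta_notin; auto. rewrite lsum_delta_in; auto. }
  rewrite lsum_swap. apply lsum_le. intros j _.
  rewrite (lsum_ext _ _ (fun k => f j * (if eqd j (s k) then 1 else 0))).
  2:{ intros; destruct (eqd j (s x)); lra. }
  rewrite lsum_scal. pose proof (count_le1 l1 s j N1 Hs). pose proof (Hf j).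
  assert (0 <= lsum l1 (fun k => if eqd j (s k) then 1 else 0)).
  { apply lsum_nonneg; intros; destruct (eqd j (s x)); lra. } nra. Qed.
End Reindex.

Definition mode_eqd (a b : mode) : {a = b} + {a <> b}.
Proof. decide equality; apply Z.eq_dec. Defined.


Definition cmod (z : cpx) : R := sqrt (Cnorm2 z).

Lemma cmod_mul z w : cmod (Cmul z w) = cmod z * cmod w.
Proof. exact (Complex.Cmod_mult z w). Qed.
Lemma cmod_add z w : cmod (Cadd z w) <= cmod z + cmod w.
Proof. exact (Complex.Cmod_triangle z w). Qed.
Lemma Cnorm2_ge0 z : 0 <= Cnorm2 z.
Proof. unfold Cnorm2; nra. Qed.
Lemma cmod_ge0 z : 0 <= cmod z.
Proof. apply sqrt_pos. Qed.
Lemma cmod_sq z : cmod z ^ 2 = Cnorm2 z.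
Proof. unfold cmod. apply pow2_sqrt, Cnorm2_ge0. Qed.
Lemma cmod_opp z : cmod (Copp z) = cmod z.
Proof. unfold cmod, Cnorm2, Copp; cbn [fst snd]. f_equal; ring. Qed.
Lemma cmod_scal r z : cmod (Cscal r z) = Rabs r * cmod z.
Proof. unfold cmod, Cnorm2, Cscal; cbn [fst snd].
  replace ((r * fst z) ^ 2 + (r * snd z) ^ 2) with (r^2 * (fst z ^2 + snd z ^2)) by ring.
  rewrite sqrt_mult by nra. f_equal. rewrite <- sqrt_Rsqr_abs. unfold Rsqr. f_equal. ring. Qed.
Lemma cmod_Ci z : cmod (Cmul Ci z) = cmod z.
Proof. rewrite cmod_mul. unfold cmod at 1. unfold Cnorm2, Ci; cbn [fst snd].
  replace (0 ^ 2 + 1 ^ 2) with 1 by ring. rewrite sqrt_1; ring. Qed.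
Lemma cmod_C0 : cmod C0 = 0.
Proof. unfold cmod, Cnorm2, C0; cbn [fst snd]. replace (0^2+0^2) with 0 by ring. apply sqrt_0. Qed.

Lemma cmod_lsum {A} (l : list A) (f : A -> cpx) :
  cmod (lsum l (fun x => fst (f x)), lsum l (fun x => snd (f x))) <= lsum l (fun x => cmod (f x)).
Proof. induction l. rewrite !lsum_nil. change (0,0) with C0. rewrite cmod_C0. lra.
  rewrite !lsum_cons. eapply Rle_trans; [apply (cmod_add (f a) (lsum l (fun x => fst (f x)), lsum l (fun x => snd (f x))))|]. lra. Qed.

Lemma cmod_Cbox n (f : mode -> cpx) : cmod (Cbox_sum n f) <= box_sum n (fun k => cmod (f k)).
Proof. unfold Cbox_sum. rewrite !box_sum_lsum. apply cmod_lsum. Qed.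

Lemma CS2 a b c d : a * c + b * d <= sqrt (a^2 + b^2) * sqrt (c^2 + d^2).
Proof. rewrite <- sqrt_mult by nra.
  destruct (Rle_dec (a*c+b*d) 0). pose proof (sqrt_pos ((a ^ 2 + b ^ 2) * (c ^ 2 + d ^ 2))); lra.
  rewrite <- (sqrt_pow2 (a*c+b*d)) by lra. apply sqrt_le_1; try nra.
  assert ((a*d - b*c)^2 >= 0) by (apply Rle_ge, pow2_ge_0). nra. Qed.


Lemma dpl_ext f g t l l' : (forall s, f s = g s) -> l = l' -> derivable_pt_lim f t l -> derivable_pt_lim g t l'.
Proof. intros H <- D eps Heps. destruct (D eps Heps) as [d Hd]. exists d. intros h Hh Hh'.
  rewrite <- !H. apply Hd; auto. Qed.

Lemma dlin f g c1 c2 t a b : derivable_pt_lim f t a -> derivable_pt_lim g t b ->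
  derivable_pt_lim (fun s => c1 * f s + c2 * g s) t (c1 * a + c2 * b).
Proof. intros Hf Hg. apply (derivable_pt_lim_plus (fun s => c1 * f s) (fun s => c2 * g s)).
  apply (derivable_pt_lim_scal f c1 t a Hf). apply (derivable_pt_lim_scal g c2 t b Hg). Qed.

Lemma dmul f g t a b : derivable_pt_lim f t a -> derivable_pt_lim g t b ->
  derivable_pt_lim (fun s => f s * g s) t (a * g t + f t * b).
Proof. intros Hf Hg. apply (derivable_pt_lim_mult f g t a b Hf Hg). Qed.

Lemma dsq f t a : derivable_pt_lim f t a -> derivable_pt_lim (fun s => f s ^ 2) t (2 * f t * a).
Proof. intros Hf. eapply dpl_ext; [| |apply (dmul f f t a a Hf Hf)]. intros; simpl; ring. simpl; ring. Qed.

Lemma dexp c t : derivable_pt_lim (fun s => exp (c * s)) t (c * exp (c * t)).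
Proof.
  assert (H1 : derivable_pt_lim (fun s => c * s) t c).
  { eapply dpl_ext; [| |apply (derivable_pt_lim_scal id c t 1 (derivable_pt_lim_id t))].
    intros; reflexivity. ring. }
  pose proof (derivable_pt_lim_comp (fun s => c * s) exp t c _ H1 (derivable_pt_lim_exp _)).
  eapply dpl_ext; [| |apply H]. intros; reflexivity. ring. Qed.

Lemma dconst c t : derivable_pt_lim (fun _ => c) t 0.
Proof. apply derivable_pt_lim_const. Qed.

Lemma deriv_lsum {A} (l : list A) (F : R -> A -> R) (dF : A -> R) t :
  (forall k, In k l -> derivable_pt_lim (fun s => F s k) t (dF k)) ->
  derivable_pt_lim (fun s => lsum l (F s)) t (lsum l dF).
Proof. induction l; intros H.
  - eapply dpl_ext; [| |apply (dconst 0 t)]; intros; rewrite ?lsum_nil; reflexivity.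
  - eapply dpl_ext; [| |apply (derivable_pt_lim_plus (fun s => F s a) (fun s => lsum l (F s)))].
    intros; rewrite lsum_cons; reflexivity. rewrite lsum_cons; reflexivity.
    apply H; left; auto. apply IHl; intros; apply H; right; auto. Qed.

Definition cdot (z w : cpx) : R := fst z * fst w + snd z * snd w.

Lemma deriv_norm (w : R -> cpx) c t dw : has_deriv_C w t dw ->
  derivable_pt_lim (fun s => Cnorm2 (Cscal (exp (c * s)) (w s))) t
    (2 * c * exp (c * t) ^ 2 * Cnorm2 (w t) + 2 * exp (c * t) ^ 2 * cdot (w t) dw).
Proof. intros [H1 H2].
  pose proof (dsq _ _ _ (dmul _ _ _ _ _ (dexp c t) H1)) as D1.
  pose proof (dsq _ _ _ (dmul _ _ _ _ _ (dexp c t) H2)) as D2.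
  eapply dpl_ext; [| |apply (derivable_pt_lim_plus _ _ t _ _ D1 D2)].
  intros; unfold Cnorm2, Cscal; cbn [fst snd]; reflexivity.
  unfold Cnorm2, cdot; ring. Qed.

Lemma deriv_curl (u : R -> vfield) k t d1 d2 :
  has_deriv_C (fun s => fst (u s k)) t d1 -> has_deriv_C (fun s => snd (u s k)) t d2 ->
  has_deriv_C (fun s => curl_hat (u s) k) t
    (Cmul Ci (Cadd (Cscal (IZR (fst k)) d2) (Cscal (- IZR (snd k)) d1))).
Proof. intros [A1 B1] [A2 B2]. split.
  - eapply dpl_ext; [| |apply (dlin _ _ (- IZR (fst k)) (IZR (snd k)) t _ _ B2 B1)].
    intros; unfold curl_hat, Cmul, Cadd, Cscal, Ci; cbn [fst snd]; ring.
    unfold Cmul, Cadd, Cscal, Ci; cbn [fst snd]; ring.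
  - eapply dpl_ext; [| |apply (dlin _ _ (IZR (fst k)) (- IZR (snd k)) t _ _ A2 A1)].
    intros; unfold curl_hat, Cmul, Cadd, Cscal, Ci; cbn [fst snd]; ring.
    unfold Cmul, Cadd, Cscal, Ci; cbn [fst snd]; ring. Qed.


Lemma knorm2_eq k : knorm2 k = IZR (fst k) ^ 2 + IZR (snd k) ^ 2.
Proof. unfold knorm2. rewrite plus_IZR, !mult_IZR. ring. Qed.
Lemma knorm2_ge0 k : 0 <= knorm2 k.
Proof. rewrite knorm2_eq. nra. Qed.
Lemma knorm_cmod k : knorm k = cmod (IZR (fst k), IZR (snd k)).
Proof. unfold knorm, cmod, Cnorm2. rewrite knorm2_eq. reflexivity. Qed.
Lemma knorm_ge0 k : 0 <= knorm k.
Proof. apply sqrt_pos. Qed.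
Lemma knorm_sq k : knorm k ^ 2 = knorm2 k.
Proof. unfold knorm. apply pow2_sqrt, knorm2_ge0. Qed.
Lemma knorm_tri k p : knorm k <= knorm p + knorm (ksub k p).
Proof. rewrite !knorm_cmod. unfold ksub; cbn [fst snd].
  replace (IZR (fst k), IZR (snd k)) with (Cadd (IZR (fst p), IZR (snd p)) (IZR (fst k - fst p), IZR (snd k - snd p))).
  apply cmod_add. unfold Cadd; cbn [fst snd]. rewrite !minus_IZR. f_equal; ring. Qed.

Lemma curl_divfree (v : vfield) k :
  Cadd (Cscal (IZR (fst k)) (fst (v k))) (Cscal (IZR (snd k)) (snd (v k))) = C0 ->
  Cnorm2 (curl_hat v k) = knorm2 k * (Cnorm2 (fst (v k)) + Cnorm2 (snd (v k))).
Proof. intros H. rewrite knorm2_eq. unfold Cadd, Cscal, C0 in H. cbn [fst snd] in H.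
  injection H as H1 H2.
  unfold curl_hat, Cnorm2, Cmul, Cadd, Cscal, Ci; cbn [fst snd].
  destruct (v k) as [[a1 b1] [a2 b2]]. cbn [fst snd] in *.
  set (x := IZR (fst k)) in *. set (y := IZR (snd k)) in *.
  transitivity ((x*b2 - y*b1)^2 + (x*a2 - y*a1)^2 + (x*a1+y*a2)^2 + (x*b1+y*b2)^2).
  rewrite H1, H2; ring. ring. Qed.

Lemma cdot_identity (v : vfield) k B1 B2 P c :
  let w := curl_hat v k in
  let d1 := Cadd B1 (Cadd (Copp (Cmul Ci (Cscal (IZR (fst k)) P))) (Copp (Cscal c (fst (v k))))) in
  let d2 := Cadd B2 (Cadd (Copp (Cmul Ci (Cscal (IZR (snd k)) P))) (Copp (Cscal c (snd (v k))))) in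
  cdot w (Cmul Ci (Cadd (Cscal (IZR (fst k)) d2) (Cscal (- IZR (snd k)) d1))) =
  cdot w (Cmul Ci (Cadd (Cscal (IZR (fst k)) B2) (Cscal (- IZR (snd k)) B1))) - c * Cnorm2 w.
Proof. intros w d1 d2. subst w d1 d2.
  unfold curl_hat, cdot, Cnorm2, Cmul, Cadd, Cscal, Copp, Ci; cbn [fst snd]. ring. Qed.

Lemma cdot_le z w : cdot z w <= cmod z * cmod w.
Proof. unfold cdot, cmod, Cnorm2. apply CS2. Qed.

Lemma cmod_RtoC r : cmod (RtoC r) = Rabs r.
Proof. unfold cmod, Cnorm2, RtoC; cbn [fst snd]. replace (r^2 + 0^2) with (r^2) by ring.
  rewrite <- sqrt_Rsqr_abs. unfold Rsqr. f_equal; ring. Qed.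

Definition Uv (v : vfield) p : R := sqrt (Cnorm2 (fst (v p)) + Cnorm2 (snd (v p))).

Lemma Uv_ge0 v p : 0 <= Uv v p.
Proof. apply sqrt_pos. Qed.

Lemma cmod_curl (v : vfield) k :
  Cadd (Cscal (IZR (fst k)) (fst (v k))) (Cscal (IZR (snd k)) (snd (v k))) = C0 ->
  cmod (curl_hat v k) = knorm k * Uv v k.
Proof. intros H. unfold cmod, knorm, Uv. rewrite curl_divfree by auto.
  apply sqrt_mult. apply knorm2_ge0. pose proof (Cnorm2_ge0 (fst (v k))); pose proof (Cnorm2_ge0 (snd (v k))); lra. Qed.

Lemma cmod_Ci1 : cmod Ci = 1.
Proof. unfold cmod, Cnorm2, Ci; cbn [fst snd]. replace (0^2+1^2) with 1 by ring. apply sqrt_1. Qed.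

Lemma s_bound (u1 u2 : cpx) (q : mode) :
  cmod (Cadd (Cmul u1 (Cmul Ci (RtoC (IZR (fst q))))) (Cmul u2 (Cmul Ci (RtoC (IZR (snd q))))))
  <= sqrt (Cnorm2 u1 + Cnorm2 u2) * knorm q.
Proof. eapply Rle_trans; [apply cmod_add|]. rewrite !cmod_mul, !cmod_Ci1, !cmod_RtoC, !Rmult_1_l.
  rewrite knorm_cmod. unfold cmod at 3. unfold Cnorm2 at 3. cbn [fst snd].
  rewrite <- (cmod_sq u1), <- (cmod_sq u2). rewrite <- (pow2_abs (IZR (fst q))), <- (pow2_abs (IZR (snd q))).
  apply CS2. Qed.

Lemma adv_bound N (v : vfield) (comp : cpx * cpx -> cpx) k :
  (forall x, cmod (comp x) <= sqrt (Cnorm2 (fst x) + Cnorm2 (snd x))) ->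
  (forall q, Cadd (Cscal (IZR (fst q)) (fst (v q))) (Cscal (IZR (snd q)) (snd (v q))) = C0) ->
  cmod (adv_hat N v comp k) <= box_sum N (fun p => Uv v p * cmod (curl_hat v (ksub k p))).
Proof. intros Hc Hd. unfold adv_hat. eapply Rle_trans; [apply cmod_Cbox|].
  rewrite !box_sum_lsum. apply lsum_le. intros p _. cbv zeta.
  rewrite cmod_mul. rewrite cmod_curl by auto.
  pose proof (s_bound (fst (v p)) (snd (v p)) (ksub k p)).
  pose proof (Hc (v (ksub k p))). fold (Uv v p) in H. fold (Uv v (ksub k p)) in H0.
  pose proof (cmod_ge0 (comp (v (ksub k p)))).
  pose proof (Uv_ge0 v p). pose proof (knorm_ge0 (ksub k p)).
  pose proof (cmod_ge0 (Cadd (Cmul (fst (v p)) (Cmul Ci (RtoC (IZR (fst (ksub k p))))))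
        (Cmul (snd (v p)) (Cmul Ci (RtoC (IZR (snd (ksub k p)))))))).
  eapply Rle_trans. apply Rmult_le_compat; eauto. nra. Qed.

Lemma nl_bound k B1 B2 M : cmod B1 <= M -> cmod B2 <= M ->
  cmod (Cmul Ci (Cadd (Cscal (IZR (fst k)) B2) (Cscal (- IZR (snd k)) B1)))
  <= (Rabs (IZR (fst k)) + Rabs (IZR (snd k))) * M.
Proof. intros H1 H2. rewrite cmod_Ci. eapply Rle_trans; [apply cmod_add|].
  rewrite !cmod_scal, Rabs_Ropp. pose proof (Rabs_pos (IZR (fst k))). pose proof (Rabs_pos (IZR (snd k))).
  nra. Qed.

Lemma per_mode_real (al eps m kn K Rk W E cw M s1 nlb : R) :
  0 < al -> 0 < eps -> 0 <= m -> K = kn ^ 2 -> 0 <= kn -> 0 <= Rk <= 1 ->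
  (Rk <> 0 -> kn <= 2 * m) -> W = cw ^ 2 -> 0 <= cw -> 0 <= M ->
  0 <= s1 -> s1 ^ 2 <= 2 * K -> nlb <= cw * (s1 * M) ->
  2 * (al * kn) * E ^ 2 * W + 2 * E ^ 2 * (nlb - eps * K * (1 - Rk) * W)
  <= (al ^ 2 + 8 * eps ^ 2 * m ^ 2) / eps * (E ^ 2 * W) + 2 / eps * (E ^ 2 * M ^ 2).
Proof. intros Hal He Hm HK Hkn HR HRk HW Hcw HM Hs1 Hs1K Hnl.
  assert (HE2 : 0 <= E ^ 2) by nra.
  assert (HW0 : 0 <= W) by nra.
  assert (L1 : 2 * al * kn * eps <= al ^ 2 + eps ^ 2 * K).
  { assert ((al - eps * kn)^2 >= 0) by (apply Rle_ge, pow2_ge_0). nra. }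
  assert (L2 : Rk * K <= 4 * m ^ 2).
  { destruct (Req_dec Rk 0) as [->|Hn]. nra. specialize (HRk Hn).
    assert (kn^2 <= (2*m)^2) by (apply pow_incr; lra). nra. }
  assert (L3 : 2 * eps * s1 * cw * M <= eps ^ 2 * K * cw ^ 2 + 2 * M ^ 2).
  { assert ((eps * s1 * cw - 2 * M)^2 >= 0) by (apply Rle_ge, pow2_ge_0).
    assert (eps^2 * s1^2 * cw^2 <= eps^2 * (2*K) * cw^2).
    { apply Rmult_le_compat_r. nra. apply Rmult_le_compat_l; nra. } nra. }
  apply (Rmult_le_reg_l eps); auto.
  replace (eps * ((al ^ 2 + 8 * eps ^ 2 * m ^ 2) / eps * (E ^ 2 * W) + 2 / eps * (E ^ 2 * M ^ 2)))
    with ((al ^ 2 + 8 * eps ^ 2 * m ^ 2) * (E ^ 2 * W) + 2 * (E ^ 2 * M ^ 2)) by (field; lra).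
  assert (A1 : 2 * al * kn * eps * (E^2 * W) <= (al ^ 2 + eps ^ 2 * K) * (E^2*W)) by (apply Rmult_le_compat_r; nra).
  assert (A2 : Rk * K * (E^2*W) <= 4 * m ^ 2 * (E^2*W)) by (apply Rmult_le_compat_r; nra).
  assert (A3 : eps * nlb <= eps * (cw * (s1 * M))) by (apply Rmult_le_compat_l; lra).
  assert (A4 : 2 * eps * s1 * cw * M * E^2 <= (eps ^ 2 * K * cw ^ 2 + 2 * M ^ 2) * E^2) by (apply Rmult_le_compat_r; nra).
  assert (A5 : eps * nlb * E^2 <= eps * (cw * (s1 * M)) * E^2) by (apply Rmult_le_compat_r; nra).
  subst W. nra. Qed.

Lemma conv_bound N (b c : mode -> R) : (forall p, 0 <= b p) -> (forall j, ~ In j (BL N) -> c j = 0) ->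
  lsum (BL N) (fun k => (lsum (BL N) (fun p => b p * c (ksub k p)))^2)
  <= (lsum (BL N) b)^2 * lsum (BL N) (fun j => c j ^ 2).
Proof. intros Hb Hc.
  set (L := BL N) in *. set (SB := lsum L b). set (SC := lsum L (fun j => c j ^ 2)).
  assert (HSB : 0 <= SB) by (apply lsum_nonneg; auto).
  eapply Rle_trans.
  { apply lsum_le. intros k _. apply (lsum_wCS L b (fun p => c (ksub k p))). auto. }
  rewrite lsum_scal. fold SB.
  rewrite lsum_swap.
  assert (lsum L (fun y => lsum L (fun x => b y * c (ksub x y) ^ 2)) <= lsum L (fun y => b y * SC)).
  { apply lsum_le. intros p _. rewrite lsum_scal. apply Rmult_le_compat_l; auto.
    apply (reindex_le mode_eqd L L (fun k => ksub k p) (fun j => c j ^ 2)).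
    apply NoDup_BL. apply NoDup_BL. intros; apply pow2_ge_0.
    intros k _. destruct (in_dec mode_eqd (ksub k p) L). right; auto. left. rewrite Hc; auto; ring.
    intros [x1 x2] [y1 y2] H. unfold ksub in H; cbn [fst snd] in H. injection H; intros. f_equal; lia. }
  rewrite (lsum_ext L (fun y => b y * SC) (fun y => SC * b y)) in H by (intros; ring).
  rewrite lsum_scal in H. fold SB in H. nra. Qed.

Definition gw (p : mode) : R := if Z.eqb (fst p * fst p + snd p * snd p) 0 then 0 else / knorm p.

Lemma S_bound N : lsum (BL N) (fun p => gw p ^ 2) <= sum_inv_sq (2 * N).
Proof. unfold sum_inv_sq. rewrite box_sum_lsum.
  set (h := fun k : mode => if ((0 <? fst k * fst k + snd k * snd k)%Z &&
            (fst k * fst k + snd k * snd k <=? Z.of_nat (2 * N) * Z.of_nat (2 * N))%Z)%bool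
            then / knorm2 k else 0).
  rewrite (lsum_ext _ _ h).
  - apply (reindex_le mode_eqd (BL N) (BL (2*N)) (fun k => k) h).
    apply NoDup_BL. apply NoDup_BL.
    intros j. unfold h. destruct (_ && _)%bool eqn:Hb; [|lra]. apply Rlt_le, Rinv_0_lt_compat.
    rewrite Bool.andb_true_iff, Z.ltb_lt in Hb. unfold knorm2. apply IZR_lt. lia.
    intros k Hk. right. apply In_BL in Hk. apply In_BL. unfold in_boxb in *.
    rewrite Bool.andb_true_iff, !Z.leb_le in *. lia.
    auto.
  - intros [a b] Hk. apply In_BL in Hk. unfold in_boxb in Hk. cbn [fst snd] in Hk.
    rewrite Bool.andb_true_iff, !Z.leb_le in Hk. unfold gw, h. cbn [fst snd].
    destruct (Z.eqb_spec (a*a+b*b) 0).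
    + rewrite e. simpl. ring.
    + replace ((0 <? a * a + b * b)%Z && (a * a + b * b <=? Z.of_nat (2 * N) * Z.of_nat (2 * N))%Z)%bool with true.
      2:{ symmetry. rewrite Bool.andb_true_iff, Z.ltb_lt, Z.leb_le. nia. }
      assert (0 < knorm2 (a,b)). { unfold knorm2; cbn [fst snd]. apply IZR_lt. nia. }
      unfold knorm. rewrite pow_inv. rewrite pow2_sqrt; lra.
Qed.


Lemma riccati (y dy : R -> R) a b t y0 : 0 < a -> 0 <= b -> 0 <= t ->
  (forall s, 0 <= y s) -> y 0 = y0 ->
  (forall s, 0 <= s -> derivable_pt_lim y s (dy s)) ->
  (forall s, 0 <= s -> dy s <= a * y s + b * y s ^ 2) ->
  0 < exp (- a * t) * (a + b * y0) - b * y0 ->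
  y t <= y0 * exp (a * t) / (1 - b * y0 / a * (exp (a * t) - 1)).
Proof. intros Ha Hb Ht Hy Hy0 Hd Hdy Hpos.
  set (J := fun s => (exp (- a * s) * y s) / (a + b * y s)).
  set (dJ := fun s => ((- a * exp (- a * s) * y s + exp (- a * s) * dy s) * (a + b * y s)
                       - (b * dy s) * (exp (- a * s) * y s)) / (a + b * y s)²).
  assert (HJ : J t <= J 0).
  { destruct (Req_dec t 0) as [->|Htn]. lra.
    assert (Hder : forall c, 0 <= c <= t -> derivable_pt_lim J c (dJ c)).
    { intros c Hc. assert (Hyc := Hy c).
      assert (D1 : derivable_pt_lim (fun s => exp (- a * s) * y s) c (- a * exp (- a * c) * y c + exp (- a * c) * dy c)).
      { exact (dmul (fun s => exp (- a * s)) y c _ _ (dexp (- a) c) (Hd c ltac:(lra))). }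
      assert (D2 : derivable_pt_lim (fun s => a + b * y s) c (b * dy c)).
      { eapply dpl_ext; [| |apply (dlin (fun _ => 1) y a b c 0 (dy c) (dconst 1 c) (Hd c ltac:(lra)))].
        intros; cbv beta; ring. ring. }
      pose proof (derivable_pt_lim_div _ _ c _ _ D1 D2 ltac:(nra)) as D3.
      eapply dpl_ext; [| |apply D3]. intros; reflexivity. reflexivity. }
    destruct (MVT_cor2 J dJ 0 t ltac:(lra) Hder) as [c [Hc1 Hc2]].
    assert (dJ c <= 0).
    { unfold dJ. assert (Hyc := Hy c). pose proof (Hdy c ltac:(lra)). pose proof (exp_pos (- a * c)).
      unfold Rdiv. assert (0 < a + b * y c) by nra.
      assert (0 < / (a + b * y c)²) by (apply Rinv_0_lt_compat; unfold Rsqr; nra).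
      assert ((- a * exp (- a * c) * y c + exp (- a * c) * dy c) * (a + b * y c) -
        b * dy c * (exp (- a * c) * y c) <= 0).
      { replace ((- a * exp (- a * c) * y c + exp (- a * c) * dy c) * (a + b * y c) -
          b * dy c * (exp (- a * c) * y c)) with (a * exp (- a * c) * (dy c - a * y c - b * y c ^ 2)) by ring.
        assert (dy c - a * y c - b * y c ^ 2 <= 0) by lra.
        assert (0 < a * exp (- a * c)) by nra. nra. }
      nra. }
    nra. }
  unfold J in HJ. rewrite Hy0 in HJ. replace (- a * 0) with 0 in HJ by ring. rewrite exp_0 in HJ.
  assert (Hyt := Hy t). assert (Hy00 : 0 <= y0) by (rewrite <- Hy0; auto).
  pose proof (exp_pos (- a * t)) as He.
  assert (Hdt : 0 < a + b * y t) by nra. assert (Hd0 : 0 < a + b * y0) by nra.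
  apply (Rmult_le_compat_r ((a + b * y t) * (a + b * y0))) in HJ; [|nra].
  replace (exp (- a * t) * y t / (a + b * y t) * ((a + b * y t) * (a + b * y0)))
    with (exp (- a * t) * y t * (a + b * y0)) in HJ by (field; lra).
  replace (1 * y0 / (a + b * y0) * ((a + b * y t) * (a + b * y0))) with (y0 * (a + b * y t)) in HJ by (field; lra).
  assert (Hyle : y t * (exp (- a * t) * (a + b * y0) - b * y0) <= a * y0) by nra.
  assert (Hbound : y t <= a * y0 / (exp (- a * t) * (a + b * y0) - b * y0)).
  { apply (Rmult_le_reg_r (exp (- a * t) * (a + b * y0) - b * y0)); auto.
    unfold Rdiv. rewrite Rmult_assoc, Rinv_l by lra. lra. }
  eapply Rle_trans; [apply Hbound|]. right.
  assert (HE : exp (a * t) * exp (- a * t) = 1). { rewrite <- exp_plus. replace (a*t + - a*t) with 0 by ring. apply exp_0. }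
  pose proof (exp_pos (a * t)).
  assert (He' : exp (- a * t) = / exp (a * t)).
  { apply (Rmult_eq_reg_l (exp (a * t))); [|lra]. rewrite HE, Rinv_r; lra. }
  rewrite He' in *. set (E := exp (a * t)) in *.
  assert (Hq : 1 - b * y0 / a * (E - 1) = E / a * (/ E * (a + b * y0) - b * y0)) by (field; lra).
  assert (0 < E / a * (/ E * (a + b * y0) - b * y0)).
  { apply Rmult_lt_0_compat; auto. unfold Rdiv; apply Rmult_lt_0_compat; auto. apply Rinv_0_lt_compat; auto. }
  assert (a + b * y0 - b * y0 * E = E * (/ E * (a + b * y0) - b * y0)) by (field; lra).
  assert (0 < E * (/ E * (a + b * y0) - b * y0)) by (apply Rmult_lt_0_compat; lra).
  rewrite Hq. field. split; [lra|split; lra].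
Qed.


Definition Yf N al (u : R -> vfield) s :=
  box_sum N (fun k => Cnorm2 (Cscal (exp (al * s * knorm k)) (curl_hat (u s) k))).

Definition dfst N eps Rhat (u : R -> vfield) (p : R -> mode -> cpx) t k :=
  Cadd (if in_boxb (Z.of_nat N) k then Copp (adv_hat N (u t) fst k) else C0)
    (Cadd (Copp (Cmul Ci (Cscal (IZR (fst k)) (p t k))))
      (Copp (Cscal (eps * knorm2 k * (1 - Rhat k)) (fst (u t k))))).
Definition dsnd N eps Rhat (u : R -> vfield) (p : R -> mode -> cpx) t k :=
  Cadd (if in_boxb (Z.of_nat N) k then Copp (adv_hat N (u t) snd k) else C0)
    (Cadd (Copp (Cmul Ci (Cscal (IZR (snd k)) (p t k))))
      (Copp (Cscal (eps * knorm2 k * (1 - Rhat k)) (snd (u t k))))).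
Definition dwf N eps Rhat u p t k :=
  Cmul Ci (Cadd (Cscal (IZR (fst k)) (dsnd N eps Rhat u p t k)) (Cscal (- IZR (snd k)) (dfst N eps Rhat u p t k))).
Definition Dk N eps Rhat al u p t k :=
  2 * (al * knorm k) * exp (al * t * knorm k) ^ 2 * Cnorm2 (curl_hat (u t) k)
  + 2 * exp (al * t * knorm k) ^ 2 * cdot (curl_hat (u t) k) (dwf N eps Rhat u p t k).

Lemma Y_deriv N eps Rhat Kt u0h u p al t :
  SV_solution N eps Rhat Kt u0h u p -> 0 <= t ->
  derivable_pt_lim (Yf N al u) t (box_sum N (Dk N eps Rhat al u p t)).
Proof. intros [Hs [Hdv [Hi He]]] Ht. unfold Yf. rewrite box_sum_lsum.
  eapply dpl_ext; [intros s; symmetry; apply box_sum_lsum| reflexivity |].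
  apply deriv_lsum. intros k _. destruct (He t k Ht) as [E1 E2].
  pose proof (deriv_curl u k t _ _ E1 E2) as Dc.
  pose proof (deriv_norm (fun s => curl_hat (u s) k) (al * knorm k) t _ Dc) as Dn.
  eapply dpl_ext; [| |apply Dn].
  - intros s. cbv beta. do 3 f_equal. ring.
  - unfold Dk. replace (al * knorm k * t) with (al * t * knorm k) by ring. reflexivity.
Qed.

Definition Mk N (u : R -> vfield) t k :=
  box_sum N (fun p0 => Uv (u t) p0 * cmod (curl_hat (u t) (ksub k p0))).

Lemma Mk_ge0 N u t k : 0 <= Mk N u t k.
Proof. unfold Mk. rewrite box_sum_lsum. apply lsum_nonneg. intros.
  apply Rmult_le_pos; [apply Uv_ge0|apply cmod_ge0]. Qed.

Lemma cmod_fst_le x : cmod (fst x) <= sqrt (Cnorm2 (fst x) + Cnorm2 (snd x)).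
Proof. apply sqrt_le_1; pose proof (Cnorm2_ge0 (fst x)); pose proof (Cnorm2_ge0 (snd x)); lra. Qed.
Lemma cmod_snd_le x : cmod (snd x) <= sqrt (Cnorm2 (fst x) + Cnorm2 (snd x)).
Proof. apply sqrt_le_1; pose proof (Cnorm2_ge0 (fst x)); pose proof (Cnorm2_ge0 (snd x)); lra. Qed.

Lemma Dk_bound N eps m Rhat Kt u0h u p al t k :
  SV_solution N eps Rhat Kt u0h u p -> 0 <= t -> 0 < al -> 0 < eps -> 0 <= m ->
  R_admissible m Rhat ->
  Dk N eps Rhat al u p t k <=
  (al ^ 2 + 8 * eps ^ 2 * m ^ 2) / eps * (exp (al * t * knorm k) ^ 2 * Cnorm2 (curl_hat (u t) k))
  + 2 / eps * (exp (al * t * knorm k) ^ 2 * Mk N u t k ^ 2).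
Proof. intros [Hs [Hdv [Hi He]]] Ht Hal Heps Hm [HR1 [HR2 HR3]].
  unfold Dk, dwf, dfst, dsnd.
  set (B1 := if in_boxb (Z.of_nat N) k then Copp (adv_hat N (u t) fst k) else C0).
  set (B2 := if in_boxb (Z.of_nat N) k then Copp (adv_hat N (u t) snd k) else C0).
  pose proof (cdot_identity (u t) k B1 B2 (p t k) (eps * knorm2 k * (1 - Rhat k))) as HI.
  cbv zeta in HI. rewrite HI. clear HI.
  assert (HB : forall comp : cpx * cpx -> cpx,
    (forall x, cmod (comp x) <= sqrt (Cnorm2 (fst x) + Cnorm2 (snd x))) ->
    cmod (if in_boxb (Z.of_nat N) k then Copp (adv_hat N (u t) comp k) else C0) <= Mk N u t k).
  { intros comp Hc. destruct (in_boxb (Z.of_nat N) k).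
    - rewrite cmod_opp. apply adv_bound; auto.
    - rewrite cmod_C0. apply Mk_ge0. }
  apply (per_mode_real al eps m (knorm k) (knorm2 k) (Rhat k) _ _ (cmod (curl_hat (u t) k)) _
     (Rabs (IZR (fst k)) + Rabs (IZR (snd k)))); auto.
  - symmetry; apply knorm_sq.
  - apply knorm_ge0.
  - intros Hn. destruct (Rle_dec (knorm k) (2 * m)); auto. exfalso. apply Hn, HR3. lra.
  - symmetry; apply cmod_sq.
  - apply cmod_ge0.
  - apply Mk_ge0.
  - pose proof (Rabs_pos (IZR (fst k))); pose proof (Rabs_pos (IZR (snd k))); lra.
  - rewrite knorm2_eq, <- (pow2_abs (IZR (fst k))), <- (pow2_abs (IZR (snd k))).
    pose proof (Rabs_pos (IZR (fst k))); pose proof (Rabs_pos (IZR (snd k))).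
    assert ((Rabs (IZR (fst k)) - Rabs (IZR (snd k)))^2 >= 0) by (apply Rle_ge, pow2_ge_0). nra.
  - eapply Rle_trans; [apply cdot_le|]. apply Rmult_le_compat_l; [apply cmod_ge0|].
    apply nl_bound. apply HB, cmod_fst_le. apply HB, cmod_snd_le.
Qed.

Lemma exp_le' x y : x <= y -> exp x <= exp y.
Proof. intros H. destruct (Rle_lt_or_eq_dec _ _ H). apply Rlt_le, exp_increasing; auto. subst; lra. Qed.

Lemma Cnorm2_scal r z : Cnorm2 (Cscal r z) = r ^ 2 * Cnorm2 z.
Proof. unfold Cnorm2, Cscal; cbn [fst snd]. ring. Qed.

Lemma curl_zero (v : vfield) k : v k = (C0, C0) -> cmod (curl_hat v k) = 0.
Proof. intros H. unfold cmod, curl_hat. rewrite H. unfold Cnorm2, Cmul, Cadd, Cscal, Ci, C0; cbn [fst snd].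
  match goal with |- sqrt ?x = 0 => replace x with 0 by ring end. apply sqrt_0. Qed.

Lemma Y_dbound N eps m Rhat Kt u0h u p al t :
  SV_solution N eps Rhat Kt u0h u p -> 0 <= t -> 0 < al -> 0 < eps -> 0 <= m ->
  R_admissible m Rhat ->
  box_sum N (Dk N eps Rhat al u p t) <=
  (al ^ 2 + 8 * eps ^ 2 * m ^ 2) / eps * Yf N al u t + 2 / eps * sum_inv_sq (2 * N) * Yf N al u t ^ 2.
Proof. intros HSV Ht Hal Heps Hm HR.
  pose proof HSV as [Hs [Hdv [Hi He]]].
  set (E := fun k => exp (al * t * knorm k)).
  set (w := fun k => curl_hat (u t) k).
  set (b := fun p0 => E p0 * Uv (u t) p0).
  set (c := fun q => E q * cmod (w q)).
  set (L := BL N).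
  assert (HE0 : forall k, 0 <= E k) by (intros; apply Rlt_le, exp_pos).
  assert (Hb0 : forall k, 0 <= b k) by (intros; apply Rmult_le_pos; auto; apply Uv_ge0).
  assert (Hc0 : forall k, 0 <= c k) by (intros; apply Rmult_le_pos; auto; apply cmod_ge0).
  assert (HY : Yf N al u t = lsum L (fun j => c j ^ 2)).
  { unfold Yf. rewrite box_sum_lsum. apply lsum_ext. intros j _. unfold c, E, w.
    rewrite Cnorm2_scal, Rpow_mult_distr, cmod_sq. reflexivity. }
  assert (HYE : box_sum N (fun k => E k ^ 2 * Cnorm2 (w k)) = Yf N al u t).
  { rewrite HY, box_sum_lsum. apply lsum_ext. intros j _. unfold c. rewrite Rpow_mult_distr, cmod_sq. reflexivity. }
  assert (HY0 : 0 <= Yf N al u t) by (rewrite HY; apply lsum_nonneg; intros; apply pow2_ge_0).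
  assert (S1 : box_sum N (Dk N eps Rhat al u p t) <=
      (al ^ 2 + 8 * eps ^ 2 * m ^ 2) / eps * Yf N al u t + 2 / eps * lsum L (fun k => (E k * Mk N u t k) ^ 2)).
  { rewrite <- HYE. rewrite !box_sum_lsum. rewrite <- !lsum_scal, <- lsum_plus. apply lsum_le. intros k _.
    rewrite Rpow_mult_distr. apply Dk_bound with (Kt := Kt) (u0h := u0h); auto. }
  assert (S2 : lsum L (fun k => (E k * Mk N u t k) ^ 2) <= lsum L (fun k => (lsum L (fun p0 => b p0 * c (ksub k p0))) ^ 2)).
  { apply lsum_le. intros k _. apply pow_incr. split. apply Rmult_le_pos; auto; apply Mk_ge0.
    unfold Mk. rewrite box_sum_lsum. fold L. rewrite <- lsum_scal. apply lsum_le. intros p0 _.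
    unfold b, c, w.
    assert (E k <= E p0 * E (ksub k p0)).
    { unfold E. rewrite <- exp_plus. apply exp_le'. pose proof (knorm_tri k p0).
      assert (0 <= al * t) by nra. nra. }
    pose proof (Uv_ge0 (u t) p0). pose proof (cmod_ge0 (curl_hat (u t) (ksub k p0))).
    assert (0 <= Uv (u t) p0 * cmod (curl_hat (u t) (ksub k p0))) by nra.
    apply (Rmult_le_compat_r (Uv (u t) p0 * cmod (curl_hat (u t) (ksub k p0)))) in H; auto. nra. }
  assert (S3 : lsum L (fun k => (lsum L (fun p0 => b p0 * c (ksub k p0))) ^ 2) <= (lsum L b) ^ 2 * lsum L (fun j => c j ^ 2)).
  { apply conv_bound; auto. intros j Hj. unfold c, w. rewrite curl_zero. ring. apply Hs; auto.
    right. destruct (in_boxb (Z.of_nat N) j) eqn:Eb; auto. exfalso; apply Hj. apply In_BL; auto. }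
  assert (S4 : (lsum L b) ^ 2 <= sum_inv_sq (2 * N) * Yf N al u t).
  { rewrite (lsum_ext L b (fun p0 => gw p0 * c p0)).
    - eapply Rle_trans; [apply lsum_CS|]. rewrite <- HY. apply Rmult_le_compat_r; auto. apply S_bound.
    - intros [p1 p2] _. unfold gw, b, c, w. cbn [fst snd]. destruct (Z.eqb_spec (p1*p1+p2*p2) 0).
      + assert (p1 = 0%Z /\ p2 = 0%Z) as [-> ->] by nia.
        unfold Uv. rewrite (Hs t (0%Z,0%Z) Ht (or_introl eq_refl)). unfold Cnorm2, C0; cbn [fst snd].
        replace (0 ^ 2 + 0 ^ 2 + (0 ^ 2 + 0 ^ 2)) with 0 by ring. rewrite sqrt_0. ring.
      + rewrite cmod_curl by (apply Hdv; auto).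
        assert (0 < knorm (p1, p2)). { unfold knorm. apply sqrt_lt_R0. unfold knorm2; cbn [fst snd]. apply IZR_lt. nia. }
        field. lra. }
  assert (HS2 : 0 <= sum_inv_sq (2 * N)).
  { unfold sum_inv_sq. rewrite box_sum_lsum. apply lsum_nonneg. intros j _.
    destruct (_ && _)%bool eqn:Hb; [|lra]. apply Rlt_le, Rinv_0_lt_compat.
    rewrite Bool.andb_true_iff, Z.ltb_lt in Hb. unfold knorm2. apply IZR_lt. lia. }
  assert (0 < 2 / eps) by (unfold Rdiv; apply Rmult_lt_0_compat; [lra|apply Rinv_0_lt_compat; lra]).
  rewrite <- HY in S3.
  assert ((lsum L b) ^ 2 * Yf N al u t <= sum_inv_sq (2 * N) * Yf N al u t * Yf N al u t)
    by (apply Rmult_le_compat_r; auto).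
  assert (2 / eps * lsum L (fun k => (E k * Mk N u t k) ^ 2) <= 2 / eps * (sum_inv_sq (2 * N) * Yf N al u t ^ 2)).
  { apply Rmult_le_compat_l; [lra|]. replace (sum_inv_sq (2 * N) * Yf N al u t ^ 2) with (sum_inv_sq (2 * N) * Yf N al u t * Yf N al u t) by ring. lra. }
  lra. Qed.


Theorem mainTheorem3 (N : nat) (eps m : R) (a : nat) (Rhat : mode -> R)
  (Kt : mode -> cpx) (u0h : vfield) (u : R -> vfield) (p : R -> mode -> cpx)
  (Cst alpha : R) :
  (2 <= N)%nat -> 0 < eps -> 0 <= m -> (1 <= a <= N)%nat ->
  R_admissible m Rhat -> K_admissible a Kt -> u0_admissible u0h ->
  SV_solution N eps Rhat Kt u0h u p ->
  0 < Cst -> (forall N' : nat, (2 <= N')%nat -> sum_inv_sq N' <= Cst * ln (INR N')) ->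
  0 < alpha ->
  let beta := alpha ^ 2 + 8 * eps ^ 2 * m ^ 2 in
  let gamma := Cst * ln (INR N) in
  let y0 := L2sq N (curl_hat (u 0)) in
  let tstar := eps / beta * ln (1 + beta / (gamma * y0)) in
  forall t : R, 0 <= t -> (y0 = 0 \/ t < tstar) ->
  expL2sq N (alpha * t) (curl_hat (u t))
    <= y0 * exp (beta * t / eps) / (1 - gamma * y0 / beta * (exp (beta * t / eps) - 1)).
Proof.
  intros HN Heps Hm Ha HR HK Hu0 HSV HC HS Hal beta gamma y0 tstar t Ht Hcase.
  set (P2 := (2 * PI) ^ 2).
  assert (HPI : 3 < PI) by (pose proof PI2_3_2; lra).
  assert (HP2 : 4 <= P2) by (unfold P2; nra).
  set (y := fun s => P2 * Yf N alpha u s).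
  set (dy := fun s => P2 * box_sum N (Dk N eps Rhat alpha u p s)).
  assert (Hbeta : 0 < beta) by (unfold beta; nra).
  assert (HN2 : 2 <= INR N) by (replace 2 with (INR 2) by (simpl; lra); apply le_INR; auto).
  assert (Hln2 : 0 < ln 2) by (rewrite <- ln_1; apply ln_increasing; lra).
  assert (HlnN : ln 2 <= ln (INR N)).
  { destruct (Req_dec (INR N) 2) as [->|]; [lra|]. apply Rlt_le, ln_increasing; lra. }
  assert (Hgamma : 0 < gamma) by (unfold gamma; nra).
  assert (HYnn : forall s, 0 <= Yf N alpha u s).
  { intros s. unfold Yf. rewrite box_sum_lsum. apply lsum_nonneg. intros; apply Cnorm2_ge0. }
  assert (Hy0 : y 0 = y0).
  { unfold y, y0, L2sq, Yf. f_equal. rewrite !box_sum_lsum. apply lsum_ext. intros k _.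
    rewrite Rmult_0_r, Rmult_0_l, exp_0. unfold Cnorm2, Cscal; cbn [fst snd]. ring. }
  assert (Hy0nn : 0 <= y0) by (rewrite <- Hy0; unfold y; specialize (HYnn 0); nra).
  set (aa := beta / eps). set (bb := gamma / eps).
  assert (Haa : 0 < aa) by (unfold aa, Rdiv; apply Rmult_lt_0_compat; [lra|apply Rinv_0_lt_compat; lra]).
  assert (Hbb : 0 < bb) by (unfold bb, Rdiv; apply Rmult_lt_0_compat; [lra|apply Rinv_0_lt_compat; lra]).
  assert (Hpos : 0 < exp (- aa * t) * (aa + bb * y0) - bb * y0).
  { pose proof (exp_pos (- aa * t)).
    assert (HE : exp (aa * t) * exp (- aa * t) = 1). { rewrite <- exp_plus. replace (aa*t + - aa*t) with 0 by ring. apply exp_0. }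
    destruct (Req_dec y0 0) as [H0|H0]. rewrite H0. nra.
    destruct Hcase as [Hc|Hc]; [contradiction|].
    assert (Hy0p : 0 < y0) by lra.
    assert (aa * t < ln (1 + aa / (bb * y0))).
    { replace (aa / (bb * y0)) with (beta / (gamma * y0)) by (unfold aa, bb; field; lra).
      unfold tstar in Hc. apply (Rmult_lt_compat_l aa) in Hc; auto.
      replace (aa * (eps / beta * ln (1 + beta / (gamma * y0)))) with (ln (1 + beta / (gamma * y0))) in Hc
        by (unfold aa; field; lra). auto. }
    assert (0 < 1 + aa / (bb * y0)).
    { assert (0 < aa / (bb * y0)) by (unfold Rdiv; apply Rmult_lt_0_compat; auto; apply Rinv_0_lt_compat; nra). lra. }
    apply exp_increasing in H1. rewrite exp_ln in H1 by auto.
    assert (bb * y0 * exp (aa * t) < bb * y0 + aa).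
    { apply (Rmult_lt_compat_l (bb * y0)) in H1; [|nra].
      replace (bb * y0 * (1 + aa / (bb * y0))) with (bb * y0 + aa) in H1 by (field; nra). lra. }
    assert (exp (- aa * t) * (aa + bb * y0) - bb * y0 = exp (- aa * t) * (aa + bb * y0 - bb * y0 * exp (aa * t))).
    { replace (exp (- aa * t) * (aa + bb * y0 - bb * y0 * exp (aa * t))) with
        (exp (- aa * t) * (aa + bb * y0) - bb * y0 * (exp (aa * t) * exp (- aa * t))) by ring.
      rewrite HE. ring. }
    rewrite H4. apply Rmult_lt_0_compat; lra. }
  pose proof (riccati y dy aa bb t y0 Haa (Rlt_le _ _ Hbb) Ht) as Hric.
  assert (Hfinal : y t <= y0 * exp (aa * t) / (1 - bb * y0 / aa * (exp (aa * t) - 1))).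
  { apply Hric; auto.
    - intros s. unfold y. specialize (HYnn s). nra.
    - intros s Hs0. unfold y, dy. apply (derivable_pt_lim_scal (Yf N alpha u) P2 s).
      apply Y_deriv with (Kt := Kt) (u0h := u0h); auto.
    - intros s Hs0. unfold y, dy.
      pose proof (Y_dbound N eps m Rhat Kt u0h u p alpha s HSV Hs0 Hal Heps Hm HR) as HB.
      fold beta in HB. fold aa in HB.
      assert (HS2 : sum_inv_sq (2 * N) <= 2 * Cst * ln (INR N)).
      { eapply Rle_trans; [apply HS; lia|]. rewrite mult_INR. replace (INR 2) with 2 by (simpl; lra).
        rewrite ln_mult by lra. nra. }
      assert (HS2' : 2 * sum_inv_sq (2 * N) <= gamma * P2).
      { assert (0 <= gamma * (P2 - 4)) by (apply Rmult_le_pos; lra). unfold gamma in *. lra. }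
      specialize (HYnn s).
      assert (2 / eps * sum_inv_sq (2 * N) * Yf N alpha u s ^ 2 * P2 <= bb * (P2 * Yf N alpha u s) ^ 2).
      { unfold bb. unfold Rdiv.
        assert (0 < / eps) by (apply Rinv_0_lt_compat; lra).
        assert (0 <= Yf N alpha u s ^ 2 * P2 * / eps) by (apply Rmult_le_pos; [nra|lra]).
        replace (2 * / eps * sum_inv_sq (2 * N) * Yf N alpha u s ^ 2 * P2) with
          ((2 * sum_inv_sq (2 * N)) * (Yf N alpha u s ^ 2 * P2 * / eps)) by ring.
        replace (gamma * / eps * (P2 * Yf N alpha u s) ^ 2) with
          ((gamma * P2) * (Yf N alpha u s ^ 2 * P2 * / eps)) by ring.
        apply Rmult_le_compat_r; auto. }
      assert (P2 * box_sum N (Dk N eps Rhat alpha u p s) <= P2 * (aa * Yf N alpha u s + 2 / eps * sum_inv_sq (2 * N) * Yf N alpha u s ^ 2))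
        by (apply Rmult_le_compat_l; lra).
      nra. }
  unfold y in Hfinal. change (expL2sq N (alpha * t) (curl_hat (u t))) with (P2 * Yf N alpha u t).
  replace (beta * t / eps) with (aa * t) by (unfold aa; field; lra).
  replace (gamma * y0 / beta) with (bb * y0 / aa) by (unfold aa, bb; field; split; lra).
  exact Hfinal.
Qed.
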